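(* Let $(E,\mathscr{T},\le)$ be a $T_2$-preordered Tychonoff space such that, with $\mathcal{F}$ the family of continuous isotone functions $f:E\to[0,1]$, $G(\le)=\bigcap_{f\in\mathcal{F}}G_f$. Let $\beta:E\to\beta E$ be the Stone–Čech compactification with topology $\mathscr{T}_\beta$ and let $\le_\beta$ be the preorder on $\beta E$ with $G(\le_\beta)=\bigcap_{f\in\mathcal{F}}G_{\tilde f}$, where $\tilde f:\beta E\to[0,1]$ is the unique continuous extension of $f\circ\beta^{-1}$. Then $\le_\beta$ is the smallest closed preorder on $(\beta E,\mathscr{T}_\beta)$ inducing $\le$ on $E$; that is, if $R$ is the graph of any closed preorder on $\beta E$ with $(\beta\times\beta)^{-1}(R)=G(\le)$, then $G(\le_\beta)\subseteq R$.
   Context: $T_2$-preordered: the graph $G(\le)=\{(x,y):x\le y\}$ of the preorder is closed in $E\times E$. Isotone: $x\le y\Rightarrow f(x)\le f(y)$. $G_f=\{(x,y):f(x)\le f(y)\}$. A preorder is closed if its graph is closed in the product topology. *)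

(* Defs.v *)
From HB Require Import structures.
From mathcomp Require Import all_boot all_order all_algebra.
From mathcomp Require Import all_classical all_reals all_analysis.
Set Implicit Arguments. Unset Strict Implicit. Unset Printing Implicit Defensive.
Import Order.TTheory GRing.Theory Num.Theory.
Import numFieldNormedType.Exports.
Local Open Scope classical_set_scope.
Local Open Scope ring_scope.

Definition is_preorder (T : Type) (le : T -> T -> Prop) :=
  (forall x, le x x) /\ (forall x y z, le x y -> le y z -> le x z).

Definition graph (T : Type) (le : T -> T -> Prop) : set (T * T) :=
  [set p | le p.1 p.2].

Definition closed_preorder (T : topologicalType) (le : T -> T -> Prop) :=
  is_preorder le /\ closed (graph le).

Definition tychonoff_space (R : realType) (T : topologicalType) :=
  (forall (a : T) (B : set T), closed B -> ~ B a ->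
     exists f : T -> R, continuous f /\ (forall x, 0 <= f x <= 1) /\
       f a = 0 /\ (forall b, B b -> f b = 1))
  /\ hausdorff_space T.

Definition cont_isotone01 (R : realType) (E : topologicalType)
    (le : E -> E -> Prop) (f : E -> R) :=
  continuous f /\ (forall x, 0 <= f x <= 1) /\
  (forall x y, le x y -> f x <= f y).

Definition stone_cech (E bE : topologicalType) (beta : E -> bE) :=
  compact [set: bE] /\ hausdorff_space bE /\ continuous beta /\
  forall (K : topologicalType), compact [set: K] -> hausdorff_space K ->
  forall g : E -> K, continuous g ->
    (exists h : bE -> K, continuous h /\ h \o beta = g) /\
    (forall h1 h2 : bE -> K, continuous h1 -> continuous h2 ->
       h1 \o beta = g -> h2 \o beta = g -> h1 = h2).

Definition le_beta (R : realType) (E bE : topologicalType) (beta : E -> bE)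
    (le : E -> E -> Prop) (x y : bE) :=
  forall f : E -> R, cont_isotone01 le f ->
  forall ft : bE -> R, continuous ft -> ft \o beta = f -> ft x <= ft y.

(* Main.v *)
Require Import Defs.
From HB Require Import structures.
From mathcomp Require Import all_boot all_order all_algebra.
From mathcomp Require Import all_classical all_reals all_analysis.
Import Order.TTheory GRing.Theory Num.Theory.
Import numFieldNormedType.Exports.
Local Open Scope classical_set_scope.
Local Open Scope ring_scope.
From mathcomp Require Import lra.
Definition upH {X : Type} (r : X -> X -> Prop) (K : set X) :=
  [set y | exists2 k, K k & r k y].
Definition dnH {X : Type} (r : X -> X -> Prop) (K : set X) :=
  [set y | exists2 k, K k & r y k].
Definition dclo {X : Type} (r : X -> X -> Prop) (S : set X) :=
  forall x y, r x y -> S y -> S x.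

Lemma upH_closed (X : topologicalType) (r : X -> X -> Prop) (K : set X) :
  compact [set: X] -> hausdorff_space X -> closed (graph r) -> closed K ->
  closed (upH r K).
Proof.
move=> cX hX cG cK.
have -> : upH r K = snd @` (graph r `&` (fst @^-1` K)).
  apply/seteqP; split=> y.
    by case=> k Kk rky; exists (k, y).
  by case=> -[k y'] [/= rky Kk] <-; exists k.
apply: compact_closed => //; apply: continuous_compact.
  by apply: continuous_subspaceT => p; exact: cvg_snd.
apply: (@subclosed_compact _ _ [set: X * X]).
- apply: closedI => //; apply: preimage_closed => // p _; exact: cvg_fst.
- by rewrite -setXTT; apply: compact_setX.
- by [].
Qed.

Lemma dnH_closed (X : topologicalType) (r : X -> X -> Prop) (K : set X) :
  compact [set: X] -> hausdorff_space X -> closed (graph r) -> closed K ->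
  closed (dnH r K).
Proof.
move=> cX hX cG cK.
have -> : dnH r K = fst @` (graph r `&` (snd @^-1` K)).
  apply/seteqP; split=> y.
    by case=> k Kk rky; exists (y, k).
  by case=> -[y' k] [/= rky Kk] <-; exists k.
apply: compact_closed => //; apply: continuous_compact.
  by apply: continuous_subspaceT => p; exact: cvg_fst.
apply: (@subclosed_compact _ _ [set: X * X]).
- apply: closedI => //; apply: preimage_closed => // p _; exact: cvg_snd.
- by rewrite -setXTT; apply: compact_setX.
- by [].
Qed.
Definition Good {X : topologicalType} (r : X -> X -> Prop) (pc : set X * set X) :=
  [/\ open pc.1, dclo r pc.1, closed pc.2, dclo r pc.2 & pc.1 `<=` pc.2].

Lemma interp_ex (X : topologicalType) (r : X -> X -> Prop) (A W : set X) :
  compact [set: X] -> hausdorff_space X -> closed_preorder r ->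
  closed A -> dclo r A -> open W -> dclo r W -> A `<=` W ->
  exists pc, [/\ Good r pc, A `<=` pc.1 & pc.2 `<=` W].
Proof.
move=> cX hX cr cA dA oW dW AW; case: cr => -[rr rt] cG.
have [|P /set_nbhsP] := @compact_normal X hX cX A cA W.
  by apply/set_nbhsP; exists W; split.
move=> [Op [oO AO OP]] clPW.
exists (~` upH r (~` Op), dnH r (closure Op)); split => /=.
- split => /=.
  + by rewrite openC; apply: upH_closed => //; rewrite closedC.
  + move=> x y rxy Hy [k Ok rkx]; apply: Hy; exists k => //; exact: rt rxy.
  + by apply: dnH_closed => //; exact: closed_closure.
  + by move=> x y rxy [k Ck ryk]; exists k => //; exact: rt ryk.
  + move=> u Hu; exists u; last exact: rr.
    apply: subset_closure; apply: contrapT => nO; apply: Hu; exists u => //.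
- move=> a Aa [k Ok rka]; exact/Ok/AO/(dA _ _ rka).
- move=> c [p /(closureS OP) /clPW Wp rcp]; exact: dW rcp Wp.
Qed.

Definition interp2 {X : topologicalType} (r : X -> X -> Prop) (p q : set X * set X) :=
  match pselect (exists pc, [/\ Good r pc, p.2 `<=` pc.1 & pc.2 `<=` q.1]) with
  | left h => projT1 (cid h) | right _ => p end.

Lemma interp2P (X : topologicalType) (r : X -> X -> Prop) p q :
  compact [set: X] -> hausdorff_space X -> closed_preorder r ->
  closed p.2 -> dclo r p.2 -> open q.1 -> dclo r q.1 -> p.2 `<=` q.1 ->
  [/\ Good r (interp2 r p q), p.2 `<=` (interp2 r p q).1 & (interp2 r p q).2 `<=` q.1].
Proof.
move=> cX hX cr c2 d2 o1 d1 s; rewrite /interp2.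
case: pselect => [h|[]]; first exact: (projT2 (cid h)).
exact: interp_ex.
Qed.

Fixpoint lev {X : topologicalType} (r : X -> X -> Prop) (P0 : set X * set X) (W : set X)
  (n k : nat) : set X * set X :=
  match n with
  | 0 => if k == 0%N then P0 else (W, setT)
  | n'.+1 => if odd k then interp2 r (lev r P0 W n' k./2) (lev r P0 W n' k./2.+1)
             else lev r P0 W n' k./2
  end.

Lemma lev_even X r P0 W n j : @lev X r P0 W n.+1 j.*2 = lev r P0 W n j.
Proof. by rewrite /= odd_double doubleK. Qed.

Lemma lev_odd X r P0 W n j : @lev X r P0 W n.+1 j.*2.+1 =
  interp2 r (lev r P0 W n j) (lev r P0 W n j.+1).
Proof. by rewrite /= odd_double /= uphalf_double. Qed.

Lemma lev_shift X r P0 W n m k : @lev X r P0 W (n + m) (k * 2 ^ m) = lev r P0 W n k.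
Proof.
elim: m => [|m IH]; first by rewrite addn0 muln1.
by rewrite addnS expnS mulnCA mul2n lev_even.
Qed.

Lemma parity k : (exists j, k = j.*2) \/ (exists j, k = j.*2.+1).
Proof.
rewrite -[k]odd_double_half; case: (odd k) => /=; [right|left]; by exists k./2.
Qed.

Lemma lev_inv (X : topologicalType) (r : X -> X -> Prop) (P0 : set X * set X) (W : set X) n :
  compact [set: X] -> hausdorff_space X -> closed_preorder r ->
  Good r P0 -> P0.2 `<=` W -> open W -> dclo r W ->
  [/\ (forall k, (k < 2 ^ n)%N -> Good r (@lev X r P0 W n k)),
      (forall k, (k < 2 ^ n)%N -> (lev r P0 W n k).2 `<=` (lev r P0 W n k.+1).1)
    & lev r P0 W n (2 ^ n) = (W, setT)].
Proof.
move=> cX hX cr G0 P0W oW dW.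
elim: n => [|n [IG IA IT]].
  split => //= k; rewrite expn0 ltnS leqn0 => /eqP -> //.
have Gq j : (j <= 2 ^ n)%N -> open (lev r P0 W n j).1 /\ dclo r (lev r P0 W n j).1.
  rewrite leq_eqVlt => /orP [/eqP ->|/IG [] //]; by rewrite IT.
have key j : (j < 2 ^ n)%N -> [/\ Good r (interp2 r (lev r P0 W n j) (lev r P0 W n j.+1)),
    (lev r P0 W n j).2 `<=` (interp2 r (lev r P0 W n j) (lev r P0 W n j.+1)).1 &
    (interp2 r (lev r P0 W n j) (lev r P0 W n j.+1)).2 `<=` (lev r P0 W n j.+1).1].
  move=> jn; have [_ _ c2 d2 _] := IG _ jn; have [ho1 hd1] := Gq j.+1 jn.
  exact: interp2P (IA _ jn).
split.
- move=> k; rewrite expnS mul2n; case: (parity k) => -[j ->].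
    rewrite ltn_double => jn; rewrite lev_even; exact: IG.
  rewrite ltn_Sdouble => jn; rewrite lev_odd; by case: (key _ jn).
- move=> k; rewrite expnS mul2n; case: (parity k) => -[j ->].
    rewrite ltn_double => jn; rewrite lev_even lev_odd; by case: (key _ jn).
  rewrite ltn_Sdouble => jn; rewrite lev_odd -doubleS lev_even.
  by case: (key _ jn).
- by rewrite expnS mul2n lev_even.
Qed.

Lemma lev_chain (X : topologicalType) (r : X -> X -> Prop) P0 W
  (IG : forall n k, (k < 2 ^ n)%N -> Good r (@lev X r P0 W n k))
  (IA : forall n k, (k < 2 ^ n)%N -> (lev r P0 W n k).2 `<=` (lev r P0 W n k.+1).1)
  n k l : (k < l)%N -> (l <= 2 ^ n)%N -> (lev r P0 W n k).2 `<=` (lev r P0 W n l).1.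
Proof.
elim: l => [//|l IH] kl ln.
have ln' : (l < 2 ^ n)%N by exact: ln.
move: kl; rewrite ltnS leq_eqVlt => /orP [/eqP ->|kl]; first exact: IA.
move=> x /(IH kl (ltnW ln')) Hx; apply: IA => //.
by have [_ _ _ _ s] := IG _ _ ln'; apply: s.
Qed.

Lemma lev_cmp (R : realType) (X : topologicalType) (r : X -> X -> Prop) P0 W
  (IG : forall n k, (k < 2 ^ n)%N -> Good r (@lev X r P0 W n k))
  (IA : forall n k, (k < 2 ^ n)%N -> (lev r P0 W n k).2 `<=` (lev r P0 W n k.+1).1)
  n m k l : (l <= 2 ^ m)%N ->
  (k%:R / (2 ^ n)%:R < l%:R / (2 ^ m)%:R :> R) ->
  (lev r P0 W n k).2 `<=` (lev r P0 W m l).1.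
Proof.
move=> lm h.
have pn : 0 < ((2 ^ n)%:R : R) by rewrite ltr0n expn_gt0.
have pm : 0 < ((2 ^ m)%:R : R) by rewrite ltr0n expn_gt0.
have e : (k * 2 ^ m < l * 2 ^ n)%N.
  rewrite -(ltr_nat R) !natrM.
  by move: h; rewrite ltr_pdivrMr // mulrAC ltr_pdivlMr.
rewrite -(lev_shift _ r P0 W n m k) -(lev_shift _ r P0 W m n l) (addnC m n).
apply: lev_chain => //.
by rewrite expnD mulnC leq_mul2l lm orbT.
Qed.
Lemma dyadic_between (R : realType) (a b : R) : 0 <= a -> a < b -> b <= 1 ->
  exists n k, (k < 2 ^ n)%N /\ a < k%:R / (2 ^ n)%:R < b.
Proof.
move=> a0 ab b1.
pose N := Num.truncn ((b - a)^-1); pose n := N.+1.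
have p0 : 0 < ((2 ^ n)%:R : R) by rewrite ltr0n expn_gt0.
have hp : (b - a)^-1 < (2 ^ n)%:R.
  apply: (lt_le_trans (truncnS_gt _)); rewrite ler_nat; exact/ltnW/ltn_expl.
have hp' : 1 < (b - a) * (2 ^ n)%:R.
  by rewrite mulrC -ltr_pdivrMr ?subr_gt0 // div1r.
pose k := (Num.truncn (a * (2 ^ n)%:R)).+1.
have k1 : a * (2 ^ n)%:R < k%:R by exact: truncnS_gt.
have k2 : k%:R <= a * (2 ^ n)%:R + 1.
  rewrite /k -addn1 natrD lerD2r truncn_le; exact: mulr_ge0 (ltW p0).
have kb : k%:R / (2 ^ n)%:R < b.
  by rewrite ltr_pdivrMr //; apply: (le_lt_trans k2); lra.
exists n, k; split; last by rewrite kb andbT ltr_pdivlMr.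
rewrite -(ltr_nat R); apply: (@lt_le_trans _ _ (b * (2 ^ n)%:R)).
  by rewrite -ltr_pdivrMr.
by rewrite ger_pMl.
Qed.

Lemma separate (R : realType) (X : topologicalType) (r : X -> X -> Prop) :
  compact [set: X] -> hausdorff_space X -> closed_preorder r ->
  forall x0 y0, ~ r x0 y0 ->
  exists g : X -> R, [/\ continuous g, (forall x, 0 <= g x <= 1),
    (forall x y, r x y -> g x <= g y), g x0 = 1 & g y0 = 0].
Proof.
move=> cX hX cr x0 y0 nxy.
have [[rr rt] cG] := cr.
pose A := dnH r [set y0]; pose W := ~` upH r [set x0].
have cA : closed A.
  apply: dnH_closed => //; exact/accessible_closed_set1/hausdorff_accessible.
have dA : dclo r A by move=> x y rxy [k Ak ryk]; exists k => //; exact: rt rxy ryk.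
have oW : open W by rewrite openC; apply: upH_closed => //;
  exact/accessible_closed_set1/hausdorff_accessible.
have dW : dclo r W.
  by move=> x y rxy Wy [k Ek rkx]; apply: Wy; exists k => //; exact: rt rkx rxy.
have AW : A `<=` W.
  move=> a [k /= -> rak] [k' /= -> rka]; apply: nxy; exact: rt rka rak.
have [P0 [G0 AP0 P0W]] := interp_ex _ _ _ _ cX hX cr cA dA oW dW AW.
have IG n k : (k < 2 ^ n)%N -> Good r (lev r P0 W n k).
  by have [] := lev_inv _ _ _ _ n cX hX cr G0 P0W oW dW; move=> h _ _; exact: h.
have IA n k : (k < 2 ^ n)%N -> (lev r P0 W n k).2 `<=` (lev r P0 W n k.+1).1.
  by have [] := lev_inv _ _ _ _ n cX hX cr G0 P0W oW dW; move=> _ h _; exact: h.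
have IT n : lev r P0 W n (2 ^ n) = (W, setT).
  by have [] := lev_inv _ _ _ _ n cX hX cr G0 P0W oW dW.
have UW n k : (k < 2 ^ n)%N -> (lev r P0 W n k).1 `<=` W.
  move=> kn x Ux; have := @lev_chain X r P0 W IG IA n k (2 ^ n) kn (leqnn _).
  rewrite IT /=; apply; by have [_ _ _ _ s] := IG _ _ kn; apply: s.
pose S z := [set v : R | v = 1 \/ exists n k, [/\ (k < 2 ^ n)%N,
   (lev r P0 W n k).1 z & v = k%:R / (2 ^ n)%:R]].
pose g z := inf (S z).
have Sne z : S z !=set0 by exists 1; left.
have Slb z : lbound (S z) 0.
  move=> v /= [->|[n [k [_ _ ->]]]] //; exact: divr_ge0.
have hl z : has_lbound (S z) by exists 0.
have g_le z v : S z v -> g z <= v by move=> Sv; exact: ge_inf.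
have g_ge z c : (forall v, S z v -> c <= v) -> c <= g z.
  by move=> h; apply: lb_le_inf.
have g_ge0 z : 0 <= g z by apply: g_ge; exact: Slb.
have g_le1 z : g z <= 1 by apply: g_le; left.
exists g; split.
- move=> z; apply/cvgrPdist_lt => e e0.
  have N1 : nbhs z [set t | g t < g z + e].
    case: (ltP 1 (g z + e)) => h.
      by apply: filterS filterT => t _; exact: le_lt_trans (g_le1 t) h.
    have gze : g z < g z + e by rewrite ltrDl.
    have [v /= [->|[n [k [kn Uz ->]]]] vlt] := inf_lt (Sne z) gze.
      by move: h; rewrite leNgt vlt.
    apply: filterS (@open_nbhs_nbhs _ z (lev r P0 W n k).1 _).
      move=> t Ut; apply: le_lt_trans vlt; apply: g_le; right; by exists n, k.
    by split => //; have [] := IG _ _ kn.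
  have N2 : nbhs z [set t | g z - e < g t].
    case: (ltP (g z - e) 0) => h.
      by apply: filterS filterT => t _; exact: lt_le_trans h (g_ge0 t).
    have gz : g z - e < g z by rewrite ltrBlDr ltrDl.
    have [n1 [k1 [k1n /andP [d1a d1b]]]] := @dyadic_between R _ _ h gz (g_le1 z).
    have d10 : 0 <= (k1%:R / (2 ^ n1)%:R : R) by exact: divr_ge0.
    have [n2 [k2 [k2n /andP [d2a d2b]]]] := @dyadic_between R _ _ d10 d1b (g_le1 z).
    have nz2 : ~ (lev r P0 W n2 k2).1 z.
      move=> Uz; have : g z <= k2%:R / (2 ^ n2)%:R by apply: g_le; right; exists n2, k2.
      by rewrite leNgt d2b.
    have nz1 : ~ (lev r P0 W n1 k1).2 z.
      by move=> Cz; apply: nz2; exact: (lev_cmp R _ _ _ _ IG IA _ _ _ _ (ltnW k2n) d2a).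
    apply: filterS (@open_nbhs_nbhs _ z (~` (lev r P0 W n1 k1).2) _); last first.
      by split => //; rewrite openC; have [] := IG _ _ k1n.
    move=> t Ct; apply: lt_le_trans d1a _; apply: g_ge.
    move=> v /= [->|[n [k [kn Ut ->]]]].
      by apply: ltW; apply: lt_le_trans d1b (g_le1 z).
    rewrite leNgt; apply/negP => hv; apply: Ct.
    have [_ _ _ _ s1] := IG _ _ kn; have [_ _ _ _ s2] := IG _ _ k1n.
    exact/s2/(lev_cmp R _ _ _ _ IG IA _ _ _ _ (ltnW k1n) hv)/s1.
  apply: filterS (filterI N1 N2) => t [h1 h2]; rewrite ltr_distlC.
  by rewrite h1 h2.
- by move=> x; rewrite g_ge0 g_le1.
- move=> x y rxy; apply: g_ge => v /= [->|[n [k [kn Uy ->]]]].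
    by [].
  apply: g_le; right; exists n, k; split => //.
  by have [_ d _ _ _] := IG _ _ kn; exact: d rxy Uy.
- apply/le_anti; rewrite g_le1 /=; apply: g_ge => v /= [->|[n [k [kn Ux ->]]]] //.
  by exfalso; apply: (UW _ _ kn _ Ux); exists x0.
- apply/le_anti; rewrite g_ge0 andbT.
  have -> : (0 : R) = 0%:R / (2 ^ 0)%:R by rewrite mul0r.
  apply: g_le; right; exists 0%N, 0%N; split => //.
  by apply: AP0; exists y0.
Qed.

Theorem mainTheorem6 (R : realType) (E bE : topologicalType)
  (le : E -> E -> Prop) (beta : E -> bE) :
  tychonoff_space R E ->
  closed_preorder le ->
  (forall x y, le x y <->
     (forall f : E -> R, cont_isotone01 le f -> f x <= f y)) ->
  stone_cech beta ->
  forall Rb : bE -> bE -> Prop,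
    closed_preorder Rb ->
    (forall x y : E, Rb (beta x) (beta y) <-> le x y) ->
    graph (le_beta R beta le) `<=` graph Rb.
Proof.
move=> _ _ _ [cX [hX [cb _]]] Rb cRb hRb [x y] /= Hle.
apply: contrapT => nR.
have [g [cg g01 giso gx gy]] := separate R _ _ cX hX cRb _ _ nR.
have : g x <= g y.
  apply: (Hle (g \o beta) _ g cg erefl); split; [|split].
  - by move=> a; apply: continuous_comp; [exact: cb | exact: cg].
  - by move=> a; exact: g01.
  - by move=> a b lab; apply: giso; apply/hRb.
by rewrite gx gy ler10.
Qed.
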